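(* For any group $B$ and any positive integer $k$, the composition $$H_2(B_k;\mathbb Z)\xrightarrow{i_*}H_2(B;\mathbb Z)\xrightarrow{\pi_*}H_2(B/B_{2k-1};\mathbb Z)$$ is the zero map, where $i$ is the inclusion and $\pi$ the quotient map.
   Context: $B_k$ denotes the $k$-th term of the lower central series: $B_1=B$, $B_{k+1}=[B,B_k]$. *)

(* Defs.v *)
(* Arbitrary (possibly infinite) groups, integral group homology
   in degree 2 via the (inhomogeneous) bar complex, with formal Z-linear
   combinations represented as lists of (coefficient, basis element). *)
From Stdlib Require Import ZArith List ClassicalDescription.
Import ListNotations.
Open Scope Z_scope.

Record isGroup {G : Type} (mul : G -> G -> G) (one : G) (inv : G -> G) : Prop := {
  grp_assoc : forall x y z, mul x (mul y z) = mul (mul x y) z;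
  grp_mul1g : forall x, mul one x = x;
  grp_mulg1 : forall x, mul x one = x;
  grp_mulVg : forall x, mul (inv x) x = one;
  grp_mulgV : forall x, mul x (inv x) = one }.

Section GroupDefs.
Variables (G : Type) (mul : G -> G -> G) (one : G) (inv : G -> G).

Definition comm (a b : G) : G := mul (mul (inv a) (inv b)) (mul a b).

Inductive gen (S : G -> Prop) : G -> Prop :=
  | gen_in : forall x, S x -> gen S x
  | gen_one : gen S one
  | gen_mul : forall x y, gen S x -> gen S y -> gen S (mul x y)
  | gen_inv : forall x, gen S x -> gen S (inv x).

(* lower central series: lcs k = B_k for k >= 1 (B_1 = B, B_{k+1} = [B, B_k]);
   lcs 0 is also set to B by convention (never used). *)
Fixpoint lcs (k : nat) : G -> Prop :=
  match k with
  | O => fun _ => True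
  | S O => fun _ => True
  | S ((S _) as n) =>
      gen (fun g => exists b x, lcs n x /\ g = comm b x)
  end.

(* Coset equivalence modulo a subgroup N : x ~ y iff x^-1 y in N
   (the equality of the quotient group B/N when N is normal). *)
Definition cong_mod (N : G -> Prop) (x y : G) : Prop := N (mul (inv x) y).

(* Bar complex boundaries (inhomogeneous, trivial Z-coefficients). *)
Definition d2 (c : list (Z * (G * G))) : list (Z * G) :=
  flat_map (fun t => let '(n, (g, h)) := t in
     [(n, h); (- n, mul g h); (n, g)]) c.

Definition d3 (c : list (Z * (G * G * G))) : list (Z * (G * G)) :=
  flat_map (fun t => let '(n, (g, h, l)) := t in
     [(n, (h, l)); (- n, (mul g h, l)); (n, (g, mul h l)); (- n, (g, h))]) c.

End GroupDefs.
Arguments d2 {G} mul c.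
Arguments d3 {G} mul c.
Arguments lcs {G} mul one inv k.
Arguments cong_mod {G} mul inv N x y.

Definition coef {X : Type} (eqv : X -> X -> Prop) (c : list (Z * X)) (x : X) : Z :=
  fold_right (fun t acc =>
    (if excluded_middle_informative (eqv (snd t) x) then fst t else 0) + acc) 0 c.

(* Equality of formal sums in the free abelian group on X / eqv. *)
Definition chain_eq {X : Type} (eqv : X -> X -> Prop) (c1 c2 : list (Z * X)) : Prop :=
  forall x, coef eqv c1 x = coef eqv c2 x.

Definition pair_rel {X : Type} (eqv : X -> X -> Prop) (p q : X * X) : Prop :=
  eqv (fst p) (fst q) /\ eqv (snd p) (snd q).

Definition is_2cycle {G : Type} (mul : G -> G -> G) (eqv : G -> G -> Prop)
    (S : G -> Prop) (z : list (Z * (G * G))) : Prop :=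
  Forall (fun t => S (fst (snd t)) /\ S (snd (snd t))) z /\
  chain_eq eqv (d2 mul z) [].

Definition is_2boundary {G : Type} (mul : G -> G -> G) (eqv : G -> G -> Prop)
    (z : list (Z * (G * G))) : Prop :=
  exists w : list (Z * (G * G * G)), chain_eq (pair_rel eqv) (d3 mul w) z.

(* Main.v *)
Require Import Defs.
From Stdlib Require Import ZArith List Lia Permutation ClassicalDescription.
Import ListNotations.
Open Scope Z_scope.

Section Grp.
Variables (B : Type) (mul : B -> B -> B) (one : B) (inv : B -> B).
Hypothesis hB : isGroup mul one inv.

Lemma gA x y z : mul (mul x y) z = mul x (mul y z).
Proof. symmetry; apply (grp_assoc _ _ _ hB). Qed.
Lemma g1l x : mul one x = x. Proof. apply (grp_mul1g _ _ _ hB). Qed.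
Lemma g1r x : mul x one = x. Proof. apply (grp_mulg1 _ _ _ hB). Qed.
Lemma gVl x : mul (inv x) x = one. Proof. apply (grp_mulVg _ _ _ hB). Qed.
Lemma gVr x : mul x (inv x) = one. Proof. apply (grp_mulgV _ _ _ hB). Qed.
Lemma gVl2 x y : mul (inv x) (mul x y) = y.
Proof. rewrite <- gA, gVl, g1l; reflexivity. Qed.
Lemma gVr2 x y : mul x (mul (inv x) y) = y.
Proof. rewrite <- gA, gVr, g1l; reflexivity. Qed.
Lemma inv_uniq x y : mul x y = one -> inv x = y.
Proof. intro H. rewrite <- (g1r (inv x)), <- H, gVl2. reflexivity. Qed.
Lemma ginv_mul x y : inv (mul x y) = mul (inv y) (inv x).
Proof. apply inv_uniq. rewrite gA, gVr2, gVr. reflexivity. Qed.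
Lemma ginv_inv x : inv (inv x) = x.
Proof. apply inv_uniq. apply gVl. Qed.
Lemma ginv_one : inv one = one.
Proof. apply inv_uniq. apply g1l. Qed.

Ltac gs := repeat progress (rewrite ?gA, ?g1l, ?g1r, ?gVl, ?gVr, ?gVl2, ?gVr2,
  ?ginv_mul, ?ginv_inv, ?ginv_one).

Definition conj (g a : B) : B := mul (mul (inv g) a) g.
Notation cm := (comm B mul inv).

Lemma hall_witt x y z :
  mul (conj y (cm (cm x (inv y)) z))
   (mul (conj z (cm (cm y (inv z)) x)) (conj x (cm (cm z (inv x)) y))) = one.
Proof. unfold conj, comm. gs. reflexivity. Qed.

Notation L := (lcs mul one inv).

Lemma L_SS n : L (S (S n)) = gen B mul one inv (fun g => exists b x, L (S n) x /\ g = cm b x).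
Proof. reflexivity. Qed.

Lemma L_one n : L n one.
Proof. destruct n as [|[|n]]; simpl; auto. apply gen_one. Qed.
Lemma L_mul n x y : L n x -> L n y -> L n (mul x y).
Proof. destruct n as [|[|n]]; simpl; auto. apply gen_mul. Qed.
Lemma L_inv n x : L n x -> L n (inv x).
Proof. destruct n as [|[|n]]; simpl; auto. apply gen_inv. Qed.

Lemma L_conj n : forall g x, L n x -> L n (conj g x).
Proof.
  induction n as [|n IH]; intros g x H. simpl; auto.
  destruct n as [|n]. simpl; auto.
  rewrite L_SS in *. induction H.
  - destruct H as (b & y & Hy & ->). apply gen_in. exists (conj g b), (conj g y).
    split. apply IH; auto. unfold conj, comm; gs; reflexivity.
  - replace (conj g one) with one by (unfold conj; gs; reflexivity). apply gen_one.
  - replace (conj g (mul x y)) with (mul (conj g x) (conj g y)) by (unfold conj; gs; reflexivity).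
    apply gen_mul; auto.
  - replace (conj g (inv x)) with (inv (conj g x)) by (unfold conj; gs; reflexivity).
    apply gen_inv; auto.
Qed.

Lemma L_comm_gen m b x : L m x -> L (S m) (cm b x).
Proof. destruct m as [|m]; simpl; auto. intro; apply gen_in; eauto. Qed.

Lemma L_S n x : L (S n) x -> L n x.
Proof.
  destruct n as [|n]. simpl; auto.
  rewrite L_SS. intro H. induction H.
  - destruct H as (b & y & Hy & ->).
    replace (cm b y) with (mul (conj b (inv y)) y) by (unfold conj, comm; gs; reflexivity).
    apply L_mul; auto. apply L_conj, L_inv; auto.
  - apply L_one.
  - apply L_mul; auto.
  - apply L_inv; auto.
Qed.

Lemma L_mono i j x : (i <= j)%nat -> L j x -> L i x.
Proof. induction 1; auto. intro; apply IHle, L_S; auto. Qed.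

Lemma L_comm_inv a b : cm a b = inv (cm b a).
Proof. unfold comm; gs; reflexivity. Qed.

Lemma L_comm : forall i j x y, L (S i) x -> L (S j) y -> L (S i + S j) (cm x y).
Proof.
  induction i as [|i IH]; intros j x y Hx Hy.
  - simpl. apply gen_in. eauto.
  - rewrite L_SS in Hx. induction Hx.
    + destruct H as (b & u & Hu & ->).
      set (N := L (S (S i) + S j)).
      assert (Ht2 : N (conj y (cm (cm (inv u) (inv y)) b))).
      { apply L_conj. rewrite L_comm_inv. apply L_inv.
        replace (S (S i) + S j)%nat with (S (S i + S j)) by lia.
        apply L_comm_gen. apply IH; apply L_inv; auto. }
      assert (Ht3 : N (conj b (cm (cm y (inv b)) (inv u)))).
      { apply L_conj. rewrite L_comm_inv. apply L_inv.
        replace (S (S i) + S j)%nat with (S i + S (S j))%nat by lia.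
        apply IH. apply L_inv; auto.
        rewrite L_comm_inv. apply L_inv. apply L_comm_gen; auto. }
      assert (Ht1 : N (conj (inv u) (cm (cm b (inv (inv u))) y))).
      { pose proof (hall_witt b (inv u) y) as HW.
        assert (E : forall a c d : B, mul a (mul c d) = one -> a = inv (mul c d)).
        { intros a c d H. rewrite <- (inv_uniq _ _ H), ginv_inv. reflexivity. }
        rewrite (E _ _ _ HW). apply L_inv, L_mul; auto. }
      rewrite ginv_inv in Ht1.
      replace (cm (cm b u) y) with (conj u (conj (inv u) (cm (cm b u) y)))
        by (unfold conj; gs; reflexivity).
      apply L_conj; auto.
    + replace (cm one y) with one by (unfold comm; gs; reflexivity). apply L_one.
    + replace (cm (mul x y0) y) with (mul (conj y0 (cm x y)) (cm y0 y))
        by (unfold conj, comm; gs; reflexivity).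
      apply L_mul; auto. apply L_conj; auto.
    + replace (cm (inv x) y) with (inv (conj (inv x) (cm x y)))
        by (unfold conj, comm; gs; reflexivity).
      apply L_inv, L_conj; auto.
Qed.


Definition ind {X : Type} (R : X -> X -> Prop) (q p : X) : Z :=
  if excluded_middle_informative (R q p) then 1 else 0.

Lemma coef_nil {X} (R : X -> X -> Prop) x : coef R [] x = 0.
Proof. reflexivity. Qed.
Lemma coef_cons {X} (R : X -> X -> Prop) n q c x :
  coef R ((n,q)::c) x = n * ind R q x + coef R c x.
Proof. unfold coef, ind; simpl. destruct excluded_middle_informative; lia. Qed.
Lemma coef_app {X} (R : X -> X -> Prop) c1 c2 x :
  coef R (c1 ++ c2) x = coef R c1 x + coef R c2 x.
Proof. induction c1 as [|[n q] c1 IH]; simpl. reflexivity.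
  rewrite IH. lia. Qed.

Section WithN.
Variable N : B -> Prop.
Hypothesis N1 : N one.
Hypothesis Nmul : forall x y, N x -> N y -> N (mul x y).
Hypothesis Ninv : forall x, N x -> N (inv x).
Hypothesis Nconj : forall g x, N x -> N (conj g x).

Definition eqv := cong_mod mul inv N.
Lemma eqv_refl x : eqv x x.
Proof. unfold eqv, cong_mod. rewrite gVl. auto. Qed.
Lemma eqv_sym x y : eqv x y -> eqv y x.
Proof. unfold eqv, cong_mod. intro H. apply Ninv in H. rewrite ginv_mul, ginv_inv in H. exact H. Qed.
Lemma eqv_trans x y z : eqv x y -> eqv y z -> eqv x z.
Proof. unfold eqv, cong_mod. intros H1 H2. pose proof (Nmul _ _ H1 H2) as H.
  rewrite gA, gVr2 in H. exact H. Qed.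

Definition E2 := pair_rel eqv.
Lemma ind_E2 a b a' b' p : eqv a a' -> eqv b b' -> ind E2 (a,b) p = ind E2 (a',b') p.
Proof.
  intros Ha Hb. unfold ind, E2, pair_rel; simpl.
  destruct excluded_middle_informative as [[H1 H2]|H1];
  destruct excluded_middle_informative as [[H3 H4]|H3]; auto; exfalso.
  - apply H3; split; eapply eqv_trans; eauto using eqv_sym.
  - apply H1; split; eapply eqv_trans; eauto using eqv_sym.
Qed.

Definition bnd (f : B * B -> Z) : Prop :=
  exists w, forall p, coef E2 (d3 mul w) p = f p.

Definition scale {Y : Type} (s : Z) (w : list (Z * Y)) := map (fun t => (s * fst t, snd t)) w.

Lemma coef_d3_app w1 w2 p : coef E2 (d3 mul (w1 ++ w2)) p = coef E2 (d3 mul w1) p + coef E2 (d3 mul w2) p.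
Proof. unfold d3. rewrite flat_map_app, coef_app. reflexivity. Qed.
Lemma coef_d3_scale s w p : coef E2 (d3 mul (scale s w)) p = s * coef E2 (d3 mul w) p.
Proof.
  induction w as [|[n [[g h] l]] w IH]. simpl. ring.
  simpl (scale s _). cbn [d3 flat_map app fst snd].
  rewrite !coef_cons. fold (d3 mul w). fold (d3 mul (scale s w)). rewrite IH. ring.
Qed.

Lemma bnd_lin f g h s t : bnd f -> bnd g -> (forall p, h p = s * f p + t * g p) -> bnd h.
Proof.
  intros [w1 H1] [w2 H2] H. exists (scale s w1 ++ scale t w2). intro p.
  rewrite coef_d3_app, !coef_d3_scale, H1, H2, H. reflexivity.
Qed.
Lemma bnd_ext f h : bnd f -> (forall p, h p = f p) -> bnd h.
Proof. intros [w H1] H. exists w. intro p. rewrite H, H1. reflexivity. Qed.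
Lemma bnd_zero : bnd (fun _ => 0).
Proof. exists []. reflexivity. Qed.

Definition tor u v : list (Z * (B * B)) := [(1,(u,v)); (-1,(v,u))].
Definition ct u v p := coef E2 (tor u v) p.
Lemma ct_eq u v p : ct u v p = ind E2 (u,v) p - ind E2 (v,u) p.
Proof. unfold ct, tor. rewrite !coef_cons, coef_nil. ring. Qed.

Lemma T0 u v : eqv v one -> bnd (ct u v).
Proof.
  intro Hv. exists [(-1,(one,one,u)); (-1,(u,one,one))]. intro p.
  cbn [d3 flat_map app]. rewrite !coef_cons, coef_nil, ct_eq.
  rewrite ?g1l, ?g1r.
  rewrite (ind_E2 u v u one) by (apply eqv_refl || auto).
  rewrite (ind_E2 v u one u) by (apply eqv_refl || auto). ring.
Qed.

Lemma ct_anti u v p : ct v u p = - ct u v p.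
Proof. rewrite !ct_eq. ring. Qed.

Lemma Tplus u v b : eqv (mul u b) (mul b u) -> eqv (mul v b) (mul b v) ->
  bnd (fun p => ct (mul u v) b p - ct u b p - ct v b p).
Proof.
  intros Hu Hv. exists [(-1,(u,v,b)); (1,(u,b,v)); (-1,(b,u,v))]. intro p.
  cbn [d3 flat_map app]. rewrite !coef_cons, coef_nil, !ct_eq.
  rewrite (ind_E2 u (mul v b) u (mul b v)) by (apply eqv_refl || auto).
  rewrite (ind_E2 (mul u b) v (mul b u) v) by (apply eqv_refl || auto).
  ring.
Qed.

Lemma Tplus_r g b1 b2 : eqv (mul b1 g) (mul g b1) -> eqv (mul b2 g) (mul g b2) ->
  bnd (fun p => ct g (mul b1 b2) p - ct g b1 p - ct g b2 p).
Proof.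
  intros H1 H2. eapply bnd_lin with (s := -1) (t := 0). apply (Tplus b1 b2 g); auto. apply bnd_zero.
  intro p. rewrite !(ct_anti _ g). ring.
Qed.

Lemma Tone b : bnd (ct one b).
Proof.
  eapply bnd_lin with (s := -1) (t := 0). apply (T0 b one), eqv_refl. apply bnd_zero.
  intro p. rewrite (ct_anti one). ring.
Qed.

Lemma Tinv u b : eqv (mul u b) (mul b u) -> eqv (mul (inv u) b) (mul b (inv u)) ->
  bnd (fun p => ct (inv u) b p + ct u b p).
Proof.
  intros H1 H2. eapply bnd_lin with (s := -1) (t := 1). apply (Tplus u (inv u) b); auto.
  apply (Tone b). intro p. rewrite gVr. ring.
Qed.

Lemma eqv_conj x a b : eqv a b -> eqv (conj x a) (conj x b).
Proof.
  unfold eqv, cong_mod. intro H. apply (Nconj x) in H.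
  replace (mul (inv (conj x a)) (conj x b)) with (conj x (mul (inv a) b))
    by (unfold conj; gs; reflexivity). exact H.
Qed.

Lemma Tconj x u v : eqv (mul u v) (mul v u) ->
  bnd (fun p => ct (conj x u) (conj x v) p - ct u v p).
Proof.
  intro H.
  exists [(1,(x,conj x u,conj x v)); (-1,(u,x,conj x v)); (1,(u,v,x));
          (-1,(x,conj x v,conj x u)); (1,(v,x,conj x u)); (-1,(v,u,x))]. intro p.
  cbn [d3 flat_map app]. rewrite !coef_cons, coef_nil, !ct_eq.
  assert (Hc : eqv (mul (conj x u) (conj x v)) (mul (conj x v) (conj x u))).
  { replace (mul (conj x u) (conj x v)) with (conj x (mul u v)) by (unfold conj; gs; reflexivity).
    replace (mul (conj x v) (conj x u)) with (conj x (mul v u)) by (unfold conj; gs; reflexivity).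
    apply eqv_conj; auto. }
  rewrite (ind_E2 x (mul (conj x u) (conj x v)) x (mul (conj x v) (conj x u))) by (apply eqv_refl || auto).
  rewrite (ind_E2 (mul u v) x (mul v u) x) by (apply eqv_refl || auto).
  unfold conj. gs. ring.
Qed.


Definition prodl (l : list B) : B := fold_right mul one l.
Fixpoint Phi (l : list B) : list (Z * (B * B)) :=
  match l with [] => [] | x :: l' => (1, (x, prodl l')) :: Phi l' end.

Definition beq c1 c2 := bnd (fun p => coef E2 c1 p - coef E2 c2 p).

Lemma eqv_mull x a b : eqv a b -> eqv (mul x a) (mul x b).
Proof. unfold eqv, cong_mod. intro H. replace (mul (inv (mul x a)) (mul x b)) with (mul (inv a) b)
  by (gs; reflexivity). exact H. Qed.

Lemma eqv_swap3 x y p : eqv (mul x y) (mul y x) -> eqv (mul y (mul x p)) (mul x (mul y p)).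
Proof.
  intro H. apply eqv_sym in H. unfold eqv, cong_mod in *. apply (Nconj p) in H.
  replace (mul (inv (mul y (mul x p))) (mul x (mul y p))) with (conj p (mul (inv (mul y x)) (mul x y)))
    by (unfold conj; gs; reflexivity). exact H.
Qed.

Section WithA.
Variable A : B -> Prop.
Hypothesis Amul : forall x y, A x -> A y -> A (mul x y).
Hypothesis Acomm : forall x y, A x -> A y -> eqv (mul x y) (mul y x).
Hypothesis Ator : forall x y, A x -> A y -> bnd (ct x y).

Lemma Phi_perm l l' : Permutation l l' -> (forall x, In x l -> A x) ->
  beq (Phi l) (Phi l') /\ eqv (prodl l) (prodl l').
Proof.
  induction 1 as [| x l l' Hp IH | x y l | l l' l'' H1 IH1 H2 IH2]; intro HA.
  - split. exists []. intro p. reflexivity. apply eqv_refl.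
  - destruct IH as [[w Hw] He]. { intros; apply HA; simpl; auto. }
    split.
    + exists w. intro p. cbn [Phi]. rewrite !coef_cons.
      rewrite (ind_E2 x (prodl l) x (prodl l')) by (apply eqv_refl || auto).
      rewrite Hw. ring.
    + simpl. apply eqv_mull; auto.
  - assert (Hx : A x) by (apply HA; simpl; auto).
    assert (Hy : A y) by (apply HA; simpl; auto).
    pose proof (Acomm x y Hx Hy) as Hxy.
    split.
    + set (q := prodl l).
      eapply bnd_lin with (s := -1) (t := -1).
      * exists [(1,(x,y,q)); (-1,(y,x,q))]. intro p. reflexivity.
      * apply (Ator x y Hx Hy).
      * intro p. cbn [Phi prodl fold_right d3 flat_map app]. fold (prodl l). fold q.
        rewrite !coef_cons, coef_nil, ct_eq.
        rewrite (ind_E2 (mul y x) q (mul x y) q) by (apply eqv_refl || apply eqv_sym; auto).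
        ring.
    + simpl. apply eqv_swap3; auto.
  - assert (HA' : forall z, In z l' -> A z).
    { intros z Hz. apply HA. apply Permutation_in with l'; auto. apply Permutation_sym; auto. }
    destruct (IH1 HA) as [Hb1 He1]. destruct (IH2 HA') as [Hb2 He2].
    split.
    + eapply bnd_lin with (s := 1) (t := 1). apply Hb1. apply Hb2. intro p. ring.
    + eapply eqv_trans; eauto.
Qed.


Definition Rel l l' c := beq (Phi l) (Phi l' ++ c) /\ prodl l = prodl l'.

Lemma Rel_ceq l l' c c' : Rel l l' c -> (forall p, coef E2 c p = coef E2 c' p) -> Rel l l' c'.
Proof.
  intros [H He] Hc. split; auto. eapply bnd_lin with (s := 1) (t := 0). apply H. apply bnd_zero.
  intro p. rewrite !coef_app, Hc. ring.
Qed.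

Lemma Rel_cons x l l' c : Rel l l' c -> Rel (x :: l) (x :: l') c.
Proof.
  intros [H He]. split.
  - eapply bnd_lin with (s := 1) (t := 0). apply H. apply bnd_zero.
    intro p. cbn [Phi app]. rewrite !coef_cons, He, !coef_app. ring.
  - simpl. fold (prodl l) (prodl l'). rewrite He. reflexivity.
Qed.

Lemma Rel_merge a b l l' c : Rel l l' c -> Rel (a :: b :: l) (mul a b :: l') (c ++ [(1,(a,b))]).
Proof.
  intros [H He]. split.
  - eapply bnd_lin with (s := 1) (t := 1). apply H.
    + exists [(1,(a,b,prodl l))]. intro p. reflexivity.
    + intro p. cbn [Phi app prodl fold_right d3 flat_map]. fold (prodl l) (prodl l').
      rewrite <- He. rewrite !coef_cons, !coef_app, !coef_cons, coef_nil. ring.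
  - simpl. fold (prodl l) (prodl l'). rewrite He, gA. reflexivity.
Qed.

Fixpoint rep2 (m : nat) (a b : B) : list B :=
  match m with O => [] | S m => a :: b :: rep2 m a b end.

Lemma Rel_rep2 m a b l l' c : Rel l l' c ->
  Rel (rep2 m a b ++ l) (repeat (mul a b) m ++ l') (c ++ [(Z.of_nat m, (a,b))]).
Proof.
  intro H. induction m as [|m IH].
  - simpl. eapply Rel_ceq. apply H. intro p. rewrite coef_app, coef_cons, coef_nil. ring.
  - simpl. eapply Rel_ceq. apply Rel_merge, IH.
    intro p. rewrite !coef_app, !coef_cons, !coef_nil. lia.
Qed.

Lemma Rel_repeat m x l l' c : Rel l l' c -> Rel (repeat x m ++ l) (repeat x m ++ l') c.
Proof. intro H. induction m; simpl; auto. apply Rel_cons; auto. Qed.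

Definition Pt (t : Z * (B * B)) : list B := let '(n, (a, b)) := t in
  if Z_le_dec 0 n then rep2 (Z.to_nat n) a b else repeat (mul a b) (Z.to_nat (- n)).
Definition Nt (t : Z * (B * B)) : list B := let '(n, (a, b)) := t in
  if Z_le_dec 0 n then repeat (mul a b) (Z.to_nat n) else rep2 (Z.to_nat (- n)) a b.
Definition Mt (t : Z * (B * B)) : list B := let '(n, (a, b)) := t in
  if Z_le_dec 0 n then repeat (mul a b) (Z.to_nat n) else repeat (mul a b) (Z.to_nat (- n)).
Definition Ct (t : Z * (B * B)) : list (Z * (B * B)) := let '(n, (a, b)) := t in
  if Z_le_dec 0 n then [(n,(a,b))] else [].
Definition Dt (t : Z * (B * B)) : list (Z * (B * B)) := let '(n, (a, b)) := t in
  if Z_le_dec 0 n then [] else [(- n,(a,b))].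

Lemma Rel_nil : Rel [] [] [].
Proof. split; auto. exists []. intro p. reflexivity. Qed.

Lemma Rel_P z : Rel (flat_map Pt z) (flat_map Mt z) (flat_map Ct z).
Proof.
  induction z as [|[n [a b]] z IH]. apply Rel_nil.
  cbn [flat_map]. unfold Pt at 1, Mt at 1, Ct at 1. destruct Z_le_dec.
  - eapply Rel_ceq. apply Rel_rep2, IH.
    intro p. rewrite !coef_app, !coef_cons, !coef_nil, Z2Nat.id by lia. ring.
  - apply Rel_repeat, IH.
Qed.

Lemma Rel_N z : Rel (flat_map Nt z) (flat_map Mt z) (flat_map Dt z).
Proof.
  induction z as [|[n [a b]] z IH]. apply Rel_nil.
  cbn [flat_map]. unfold Nt at 1, Mt at 1, Dt at 1. destruct Z_le_dec.
  - apply Rel_repeat, IH.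
  - eapply Rel_ceq. apply Rel_rep2, IH.
    intro p. rewrite !coef_app, !coef_cons, !coef_nil, Z2Nat.id by lia. ring.
Qed.

Lemma coef_CD z p : coef E2 z p = coef E2 (flat_map Ct z) p - coef E2 (flat_map Dt z) p.
Proof.
  induction z as [|[n [a b]] z IH]. reflexivity.
  cbn [flat_map]. unfold Ct at 1, Dt at 1. rewrite !coef_app, coef_cons, IH.
  destruct Z_le_dec; rewrite ?coef_cons, ?coef_nil; ring.
Qed.

Definition dec (x y : B) : {x = y} + {x <> y} := excluded_middle_informative (x = y).

Lemma count_rep2 m a b x :
  Z.of_nat (count_occ dec (rep2 m a b) x) = Z.of_nat m * (ind (@eq B) a x + ind (@eq B) b x).
Proof.
  induction m as [|m IH]. reflexivity.
  cbn [rep2 count_occ]. unfold ind in *. unfold dec in *. cbv beta in *.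
  destruct (excluded_middle_informative (a = x)); destruct (excluded_middle_informative (b = x));
  rewrite ?Nat2Z.inj_succ, IH; lia.
Qed.

Lemma count_rep m y x : Z.of_nat (count_occ dec (repeat y m) x) = Z.of_nat m * ind (@eq B) y x.
Proof.
  induction m as [|m IH]. reflexivity.
  cbn [repeat count_occ]. unfold ind in *. unfold dec in *. cbv beta in *.
  destruct (excluded_middle_informative (y = x)); rewrite ?Nat2Z.inj_succ, IH; lia.
Qed.

Lemma count_PN z x : Z.of_nat (count_occ dec (flat_map Pt z) x) - Z.of_nat (count_occ dec (flat_map Nt z) x)
  = coef (@eq B) (d2 mul z) x.
Proof.
  induction z as [|[n [a b]] z IH]. reflexivity.
  cbn [flat_map d2]. fold (d2 mul z). unfold Pt at 1, Nt at 1.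
  rewrite !count_occ_app, !Nat2Z.inj_add. cbn [flat_map app]. rewrite !coef_cons.
  rewrite <- IH.
  destruct Z_le_dec; rewrite ?count_rep2, ?count_rep, Z2Nat.id by lia; ring.
Qed.

Lemma cycle_bnd z : Forall (fun t => A (fst (snd t)) /\ A (snd (snd t))) z ->
  chain_eq (@eq B) (d2 mul z) [] -> bnd (coef E2 z).
Proof.
  intros HF Hc.
  assert (Hperm : Permutation (flat_map Pt z) (flat_map Nt z)).
  { apply (Permutation_count_occ dec). intro x. pose proof (count_PN z x) as E.
    rewrite Hc in E. simpl in E. lia. }
  assert (HA : forall x, In x (flat_map Pt z) -> A x).
  { intros x Hx. apply in_flat_map in Hx. destruct Hx as [[n [a b]] [Ht Hx]].
    rewrite Forall_forall in HF. destruct (HF _ Ht) as [Ha Hb]; simpl in Ha, Hb.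
    unfold Pt in Hx. destruct Z_le_dec.
    - induction (Z.to_nat n); simpl in Hx. contradiction.
      destruct Hx as [<-|[<-|Hx]]; auto.
    - apply repeat_spec in Hx. subst. auto. }
  destruct (Phi_perm _ _ Hperm HA) as [H1 _].
  destruct (Rel_P z) as [H2 _]. destruct (Rel_N z) as [H3 _].
  eapply bnd_lin with (s := -1) (t := 1).
  - eapply bnd_lin with (s := 1) (t := -1). apply H2. apply H3. intro p. reflexivity.
  - apply H1.
  - intro p. cbv beta. rewrite !coef_app, coef_CD. ring.
Qed.

End WithA.

Lemma bnd_add f g : bnd f -> bnd g -> bnd (fun p => f p + g p).
Proof. intros H1 H2. apply (bnd_lin f g (fun p => f p + g p) 1 1 H1 H2). intro p. ring. Qed.

Section Main.
Variable k : nat.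
Hypothesis hk : (2 <= k)%nat.
Hypothesis HN : forall x, N x <-> L (2 * k - 1) x.

Lemma commN i j a b : (1 <= i)%nat -> (1 <= j)%nat -> (2 * k - 1 <= i + j)%nat ->
  L i a -> L j b -> eqv (mul a b) (mul b a).
Proof.
  intros Hi Hj Hij Ha Hb. unfold eqv, cong_mod.
  replace (mul (inv (mul a b)) (mul b a)) with (cm b a) by (unfold comm; gs; reflexivity).
  apply HN. destruct i as [|i]; [lia|]. destruct j as [|j]; [lia|].
  apply (L_mono _ (S j + S i)); [lia|]. apply L_comm; auto.
Qed.

Lemma Tind : forall i j a b, (1 <= j)%nat -> (2 * k <= S i + j)%nat ->
  L (S i) a -> L j b -> bnd (ct a b).
Proof.
  induction i as [|i IH]; intros j a b Hj Hij Ha Hb.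
  - apply T0. unfold eqv, cong_mod. rewrite g1r. apply Ninv, HN.
    apply (L_mono _ j); auto. lia.
  - rewrite L_SS in Ha. induction Ha as [x Hx| |x y Hx IHx Hy IHy|x Hx IHx].
    + destruct Hx as (x0 & y & Hy & ->).
      set (g := inv y). set (u := conj x0 g). set (v := mul (mul x0 b) (inv x0)).
      set (b' := cm b (inv x0)).
      assert (Hg : L (S i) g) by (apply L_inv; auto).
      assert (Hu : L (S i) u) by (apply L_conj; auto).
      assert (Hv : L j v).
      { replace v with (conj (inv x0) b) by (unfold v, conj; gs; reflexivity). apply L_conj; auto. }
      assert (Hb' : L (S j) b').
      { unfold b'. rewrite L_comm_inv. apply L_inv, L_comm_gen; auto. }
      assert (S1 : bnd (fun p => ct (cm x0 y) b p - ct u b p - ct y b p)).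
      { replace (cm x0 y) with (mul u y) by (unfold u, g, conj, comm; gs; reflexivity).
        apply Tplus; apply (commN (S i) j); auto; lia. }
      assert (S2 : bnd (fun p => ct u b p - ct g v p)).
      { pose proof (Tconj x0 g v) as T. replace (conj x0 v) with b in T
          by (unfold v, conj; gs; reflexivity). apply T. apply (commN (S i) j); auto; lia. }
      assert (S3 : bnd (fun p => ct g v p - ct g b p - ct g b' p)).
      { replace v with (mul b b') by (unfold v, b', comm; gs; reflexivity).
        apply Tplus_r; [apply (commN j (S i)) | apply (commN (S j) (S i))]; auto; lia. }
      assert (S4 : bnd (fun p => ct g b p + ct y b p)).
      { apply Tinv; apply (commN (S i) j); auto; lia. }
      assert (S5 : bnd (ct g b')) by (apply (IH (S j)); auto; lia).
      eapply bnd_ext.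
      * apply (bnd_add _ _ S1 (bnd_add _ _ S2 (bnd_add _ _ S3 (bnd_add _ _ S4 S5)))).
      * intro p. ring.
    + apply Tone.
    + rewrite <- L_SS in Hx, Hy.
      eapply bnd_ext.
      * apply (bnd_add _ _ (Tplus x y b ltac:(apply (commN (S (S i)) j); auto; lia) ltac:(apply (commN (S (S i)) j); auto; lia))
                 (bnd_add _ _ IHx IHy)).
      * intro p. ring.
    + rewrite <- L_SS in Hx.
      assert (Hx' : L (S (S i)) (inv x)) by (apply L_inv; auto).
      eapply bnd_ext.
      * apply (bnd_lin _ _ _ 1 (-1) (Tinv x b ltac:(apply (commN (S (S i)) j); auto; lia) ltac:(apply (commN (S (S i)) j); auto; lia)) IHx).
        intro p. reflexivity.
      * intro p. ring.
Qed.

End Main.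

End WithN.
End Grp.

Lemma final_gen (B : Type) (mul : B -> B -> B) (one : B) (inv : B -> B)
  (hB : isGroup mul one inv) (k : nat) (hk : (1 <= k)%nat)
  (Ator : forall x y, lcs mul one inv k x -> lcs mul one inv k y ->
     bnd B mul inv (lcs mul one inv (2 * k - 1)) (ct B mul inv (lcs mul one inv (2 * k - 1)) x y))
  (Acomm : forall x y, lcs mul one inv k x -> lcs mul one inv k y ->
     eqv B mul inv (lcs mul one inv (2 * k - 1)) (mul x y) (mul y x))
  (z : list (Z * (B * B))) :
  is_2cycle mul (@eq B) (lcs mul one inv k) z ->
  is_2boundary mul (cong_mod mul inv (lcs mul one inv (2 * k - 1))) z.
Proof.
  intros [HF Hc].
  assert (Hb : bnd B mul inv (lcs mul one inv (2 * k - 1))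
                 (coef (E2 B mul inv (lcs mul one inv (2 * k - 1))) z)).
  { eapply cycle_bnd; eauto.
    - apply L_one.
    - intros; apply L_mul; auto.
    - intros; apply L_inv; auto.
    - intros; apply L_conj; auto.
    - intros; apply L_mul; auto. }
  destruct Hb as [w Hw]. exists w. intro p. apply Hw.
Qed.

Theorem lemma5p4 (B : Type) (mul : B -> B -> B) (one : B) (inv : B -> B)
  (hB : isGroup mul one inv) (k : nat) (hk : (1 <= k)%nat)
  (z : list (Z * (B * B))) :
  is_2cycle mul (@eq B) (lcs mul one inv k) z ->
  is_2boundary mul (cong_mod mul inv (lcs mul one inv (2 * k - 1))) z.
Proof.
  apply final_gen; auto.
  - intros x y Hx Hy. destruct k as [|[|k']]; [lia| |].
    + exists []. intro p. rewrite ct_eq by auto. simpl coef.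
      rewrite (ind_E2 B mul one inv hB (lcs mul one inv (2*1-1)) (fun _ _ _ _ => I) (fun _ _ => I) x y y x p) by exact I.
      ring.
    + set (N := lcs mul one inv (2 * S (S k') - 1)).
      apply (Tind B mul one inv hB N (L_one _ _ _ _ _) (fun a b => L_mul _ _ _ _ _ a b)
        (fun a => L_inv _ _ _ _ _ a) (fun g a => L_conj _ _ _ _ hB _ g a) (S (S k'))
        ltac:(lia) (fun _ => iff_refl _) (S k') (S (S k')) x y); auto; lia.
  - intros x y Hx Hy. destruct k as [|[|k']]; [lia| |].
    + exact I.
    + set (N := lcs mul one inv (2 * S (S k') - 1)).
      apply (commN B mul one inv hB N (S (S k'))
        ltac:(lia) (fun _ => iff_refl _) (S (S k')) (S (S k')) x y); auto; lia.
Qed.
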